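(* Consider the Boosting SDP for input matrix $\hat A\in\mathbb R^{n\times n}$, labels $\ell\in\{-1,1\}^n$ with $L=\ell\ell^T$, and parameters $0<\zeta<1$, $d>0$, $K\ge10^4$. Suppose there are an $n\times n$ matrix $F$ and a subset $S\subseteq[n]$ with $|S|\ge(1-\theta)n$, where $\theta\le\zeta$, such that: (i) $(F\odot L)_{S\times S}$ is entrywise nonnegative; (ii) $(\hat A-F)_{S\times S}=Y+Z$ with $\|Y\|_{\mathrm{op}}\le Kd$ and $|Z_{ij}|\le Kd/(\zeta n)$ for all $i,j$; (iii) $((\hat A-F)\odot L)_{S\times S}$ is $(10dK^3,\theta dK)$-resolvable. Then setting $\rho=\theta$, $w_i=1$ for $i\notin S$ and $w_i=0$ for $i\in S$, $N$ the indicator matrix of $([n]\setminus S)\times([n]\setminus S)$, and $W$ the indicator matrix of $S\times S$ gives a feasible solution of the Boosting SDP with objective value $\rho=\theta$.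
   Context: Notation: $J$ all-ones matrix, $\mathbf 1$ all-ones vector, $\odot$ entrywise product, $\langle X,Y\rangle=\sum_{ij}X_{ij}Y_{ij}$, $\|\cdot\|_1$ trace norm, $\|\cdot\|_{\mathrm{op}}$ operator norm, $M_{S\times T}$ submatrix indexed by $S\times T$. Resolvability: an $m\times m$ matrix $X$ is $(d_1,d_2)$-resolvable if for all $x_1,\dots,x_m\in[0,1]$ with $\sum_ix_i\le10^{-6}m$, $\langle X,Y_x\rangle\ge d_1\sum_ix_i-d_2m$, where $(Y_x)_{ij}=x_i$. Pseudorectangles: $\mathcal R_n(\theta)$ is the set of $n\times n$ matrices $M$ with $0\le M_{ij}\le1$, $\sum_{ij}|M_{ij}|\le\theta^2n^2$, $\|M\|_1\le\theta n$. Approximate row selectors: $(M,x_1,\dots,x_n)\in\mathcal S_n(\theta,\delta)$ if $0\le M_{ij}\le1$, $0\le x_i\le1$, $\sum_ix_i\le\theta n$, and $M=Y_x-N$ for some $N\in\mathcal R_n(\sqrt{\theta\delta})$. Boosting SDP (inputs $\hat A,\ell$, parameters $\zeta,d,K$ with $0<\zeta<1$, $K\ge10^4$): variables $\rho\in[0,\zeta]$, $w\in\mathbb R^n$, $W\in\mathbb R^{n\times n}$, $N\in\mathcal R_n(\rho)$ with $0\le w_i\le1$, $\sum_iw_i\le\rho n$, $W_{ij}\ge0$, $W_{ij}=1-w_i-w_j+N_{ij}$ for all $i,j$, and for every $\rho'$ with $\rho/K\le\rho'\le\zeta$ and every $(M,x)\in\mathcal S_n(\rho',K\rho')$: $\langle\hat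 A\odot L\odot W,M\rangle\ge10dK^2\big(K\sum_ix_i(1-w_i)-\rho'n\big)$, where $L=\ell\ell^T$. Objective: minimize $\rho$. *)

(* Defs.v *)
From HB Require Import structures.
From mathcomp Require Import all_boot all_order all_algebra.
Set Implicit Arguments. Unset Strict Implicit. Unset Printing Implicit Defensive.
Import Order.TTheory GRing.Theory Num.Theory.
Local Open Scope ring_scope.

Section Defs.
Variable R : rcfType.

Definition frob {m : nat} (X Y : 'M[R]_m) : R := \sum_i \sum_j X i j * Y i j.

Definition Yx {m : nat} (x : 'I_m -> R) : 'M[R]_m := \matrix_(i, j) x i.

Definition hadamard {m : nat} (X Y : 'M[R]_m) : 'M[R]_m := \matrix_(i, j) (X i j * Y i j).

Definition outer {m : nat} (l : 'I_m -> R) : 'M[R]_m := \matrix_(i, j) (l i * l j).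

(* submatrix M_{S x S}, indexed by 'I_#|S| via the enumeration of S *)
Definition subSxS {n : nat} (S : {set 'I_n}) (M : 'M[R]_n) : 'M[R]_#|S| :=
  \matrix_(i, j) M (enum_val i) (enum_val j).

Definition opnorm_le {m : nat} (M : 'M[R]_m) (c : R) : Prop :=
  0 <= c /\ forall v : 'cV[R]_m,
    Num.sqrt (\sum_i (M *m v) i 0 ^+ 2) <= c * Num.sqrt (\sum_i v i 0 ^+ 2).

(* ||M||_1 <= c : trace norm (sum of singular values), via a singular value
   decomposition M = U diag(sigma) V^T (singular values are unique). *)
Definition orthogonal {m : nat} (U : 'M[R]_m) : Prop := U^T *m U = 1%:M.
Definition tracenorm_le {m : nat} (M : 'M[R]_m) (c : R) : Prop :=
  exists (U V : 'M[R]_m) (sigma : 'rV[R]_m),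
    [/\ orthogonal U, orthogonal V, (forall i, 0 <= sigma 0 i),
        M = U *m diag_mx sigma *m V^T & \sum_i sigma 0 i <= c].

Definition resolvable {m : nat} (X : 'M[R]_m) (d1 d2 : R) : Prop :=
  forall x : 'I_m -> R, (forall i, 0 <= x i <= 1) ->
    \sum_i x i <= 10^-1 ^+ 6 * m%:R ->
    frob X (Yx x) >= d1 * (\sum_i x i) - d2 * m%:R.

Definition pseudorect {n : nat} (theta : R) (M : 'M[R]_n) : Prop :=
  [/\ (forall i j, 0 <= M i j <= 1),
      \sum_i \sum_j `|M i j| <= theta ^+ 2 * n%:R ^+ 2
    & tracenorm_le M (theta * n%:R)].

Definition rowsel {n : nat} (theta delta : R) (M : 'M[R]_n) (x : 'I_n -> R) : Prop :=
  [/\ (forall i j, 0 <= M i j <= 1), (forall i, 0 <= x i <= 1),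
      \sum_i x i <= theta * n%:R
    & exists N : 'M[R]_n, pseudorect (Num.sqrt (theta * delta)) N /\ M = Yx x - N].

Definition boosting_feasible {n : nat} (Ahat : 'M[R]_n) (ell : 'I_n -> R)
    (zeta d K : R) (rho : R) (w : 'I_n -> R) (W N : 'M[R]_n) : Prop :=
  0 <= rho <= zeta /\ pseudorect rho N /\
  (forall i, 0 <= w i <= 1) /\ \sum_i w i <= rho * n%:R /\
  (forall i j, 0 <= W i j) /\
  (forall i j, W i j = 1 - w i - w j + N i j) /\
  (forall (rho' : R), rho / K <= rho' <= zeta ->
      forall (M : 'M[R]_n) (x : 'I_n -> R), rowsel rho' (K * rho') M x ->
        frob (hadamard (hadamard Ahat (outer ell)) W) M >=
          10%:R * d * K ^+ 2 * (K * (\sum_i x i * (1 - w i)) - rho' * n%:R)).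

End Defs.

(* Main.v *)
Require Import Defs.
From HB Require Import structures.
From mathcomp Require Import all_boot all_order all_algebra.
From mathcomp Require Import ring lra.
Import Order.TTheory GRing.Theory Num.Theory.
Local Open Scope ring_scope.

Section H.
Variable R : rcfType.

Lemma amgm (m : nat) (c : R) (u w : 'I_m -> R) : 0 < c ->
  \sum_a u a * w a <= (c * \sum_a u a ^+ 2 + (\sum_a w a ^+ 2) / c) / 2.
Proof.
move=> c0.
have h : forall a, u a * w a <= (c * u a ^+ 2 + w a ^+ 2 / c) / 2.
  move=> a.
  have h1 : 0 <= (c * u a - w a) ^+ 2 / c by rewrite divr_ge0 // ?sqr_ge0 // ltW.
  have e : (c * u a ^+ 2 + w a ^+ 2 / c) / 2 - u a * w a = (c * u a - w a) ^+ 2 / c / 2.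
    by field; rewrite gt_eqF.
  rewrite -subr_ge0 e; apply: divr_ge0 => //.
apply: le_trans (ler_sum _ (fun a _ => h a)) _.
rewrite -mulr_suml big_split /= -mulr_sumr -mulr_suml.
by [].
Qed.

Lemma opbound (m : nat) (Y : 'M[R]_m) (c : R) (u v : 'I_m -> R) : 0 < c ->
  opnorm_le Y c ->
  \sum_a u a * (\sum_b Y a b * v b) <= c * (\sum_a u a ^+ 2 + \sum_a v a ^+ 2) / 2.
Proof.
move=> c0 [_ hY].
have hs0 := hY (\col_b v b).
pose w : 'I_m -> R := fun a => (Y *m \col_b v b) a 0.
have ew : forall a, \sum_b Y a b * v b = w a.
  by move=> a; rewrite /w mxE; apply: eq_bigr => b _; rewrite mxE.
under eq_bigr do rewrite ew.
have ev : \sum_i (\col_b v b) i 0 ^+ 2 = \sum_i v i ^+ 2.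
  by apply: eq_bigr => i _; rewrite mxE.
rewrite ev -/w in hs0; have hs := hs0.
have s1 : 0 <= \sum_i v i ^+ 2 by apply: sumr_ge0 => i _; apply: sqr_ge0.
have s2 : 0 <= \sum_i w i ^+ 2 by apply: sumr_ge0 => i _; apply: sqr_ge0.
have hw : \sum_i w i ^+ 2 <= c ^+ 2 * \sum_i v i ^+ 2.
  rewrite -(sqr_sqrtr s1) -(sqr_sqrtr s2) -exprMn.
  have := sqrtr_ge0 (\sum_i w i ^+ 2); have := sqrtr_ge0 (\sum_i v i ^+ 2).
  move: hs; set A := Num.sqrt _; set B := Num.sqrt _ => hs hA hB.
  nra.
apply: le_trans (amgm m c u w c0) _.
have : (\sum_a w a ^+ 2) / c <= c * \sum_i v i ^+ 2.
  rewrite ler_pdivrMr //. nra.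
nra.
Qed.
Lemma rank1_tn (n : nat) (S : {set 'I_n}) :
  tracenorm_le (\matrix_(i, j) ((i \notin S) && (j \notin S))%:R : 'M[R]_n) #|~: S|%:R.
Proof.
have [c0 | /card_gt0P [k hk]] := posnP #|~: S|.
  exists 1%:M, 1%:M, 0; split.
  - by rewrite /Defs.orthogonal trmx1 mulmx1.
  - by rewrite /Defs.orthogonal trmx1 mulmx1.
  - by move=> i; rewrite mxE.
  - apply/matrixP => i j; rewrite trmx1 mulmx1 mul1mx !mxE.
    have := cards0_eq c0 => /setP /(_ i); rewrite in_setC in_set0 => ->.
    by rewrite /= mul0rn.
  - by rewrite c0 big1 // => i _; rewrite mxE.
set c := #|~: S|.
pose cR : R := c%:R.
have cpos : 0 < cR by rewrite ltr0n; apply/card_gt0P; exists k.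
pose s := Num.sqrt cR.
have spos : 0 < s by rewrite sqrtr_gt0.
have s2 : s ^+ 2 = cR by rewrite sqr_sqrtr // ltW.
pose uf (i : 'I_n) : R := (i \notin S)%:R.
pose ef (i : 'I_n) : R := (i == k)%:R.
pose qf (i : 'I_n) : R := s^-1 * uf i.
have hkS : k \notin S by rewrite -in_setC.
have Su : \sum_i uf i = cR.
  rewrite /cR -sumr_const [RHS]big_mkcond /=; apply: eq_bigr => i _.
  by rewrite /uf in_setC; case: (i \in S).
have Sd : forall g : 'I_n -> R, \sum_i ef i * g i = g k.
  move=> g; rewrite (bigD1 k) //= big1 ?addr0 => [|i /negbTE ik].
    by rewrite /ef eqxx mul1r.
  by rewrite /ef ik mul0r.
have Sq : \sum_i qf i ^+ 2 = 1.
  have -> : \sum_i qf i ^+ 2 = s^-1 ^+ 2 * \sum_i uf i.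
    rewrite mulr_sumr; apply: eq_bigr => i _; rewrite /qf /uf exprMn.
    by case: (i \in S); rewrite /= ?expr0n ?expr1n.
  by rewrite Su -s2 exprVn mulVf // expf_neq0 // gt_eqF.
have qk : qf k = s^-1 by rewrite /qf /uf hkS mulr1.
pose v : 'cV[R]_n := \col_i (ef i - qf i).
pose beta := (v^T *m v) 0 0.
pose gam := 1 - s^-1.
have hbeta : beta = 2 * gam.
  rewrite /beta mxE.
  have -> : \sum_j v^T 0 j * v j 0 = \sum_j (ef j * ef j - 2 * (ef j * qf j) + qf j ^+ 2).
    by apply: eq_bigr => j _; rewrite !mxE; ring.
  rewrite big_split big_split /= sumrN -mulr_sumr !Sd Sq qk /ef eqxx /gam.
  rewrite /= mulr1n; ring.
pose e : 'cV[R]_n := \col_i ef i.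
pose q : 'cV[R]_n := \col_i qf i.
have hv : v = e - q by apply/matrixP => i j; rewrite !mxE.
have hbs : beta = \sum_j v j 0 ^+ 2.
  by rewrite /beta mxE; apply: eq_bigr => j _; rewrite mxE expr2.
have hve : v^T *m e = gam%:M.
  rewrite [LHS]mx11_scalar; congr (_%:M); rewrite mxE.
  under eq_bigr do rewrite !mxE mulrC.
  by rewrite Sd qk /ef eqxx /gam mulr1n.
pose alpha := 2 / beta.
have hag : (alpha * gam) *: v = v.
  have [g0 | gn0] := eqVneq gam 0.
    have b0 : beta = 0 by rewrite hbeta g0 mulr0.
    have v0 : v = 0.
      apply/matrixP => i j; rewrite (ord1 j) mxE.
      have hb : \sum_(j | predT j) v j 0 ^+ 2 = 0 by rewrite -hbs b0.
      have := psumr_eq0P (fun j _ => sqr_ge0 (v j 0)) hb (erefl : predT i = true).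
      by move/eqP; rewrite sqrf_eq0 mxE => /eqP ->; rewrite mxE.
    by rewrite v0 scaler0.
  have -> : alpha * gam = 1 by rewrite /alpha hbeta; field; rewrite gn0.
  by rewrite scale1r.
have haa : alpha * alpha * beta = alpha + alpha.
  have [b0 | bn0] := eqVneq beta 0.
    by rewrite /alpha b0 invr0 !mulr0 addr0.
  by rewrite /alpha; field.
pose H := 1%:M - alpha *: (v *m v^T).
have hHT : H^T = H.
  by rewrite /H linearB /= trmx1 linearZ /= trmx_mul trmxK.
have hvv : v *m v^T *m (v *m v^T) = beta *: (v *m v^T).
  rewrite mulmxA -(mulmxA v) [v^T *m v]mx11_scalar -/beta.
  by rewrite mul_mx_scalar -scalemxAl.
have hH : H^T *m H = 1%:M.
  rewrite hHT /H mulmxBl mul1mx mulmxBr mulmx1 -scalemxAl -scalemxAr hvv.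
  rewrite !scalerA haa scalerDl.
  set X := alpha *: _.
  by rewrite opprB addrK subrK.
have hHe : H *m e = q.
  rewrite /H mulmxBl mul1mx -scalemxAl -mulmxA hve mul_mx_scalar scalerA hag.
  by rewrite hv opprB addrC subrK.
pose sig : 'rV[R]_n := \row_j (ef j * cR).
exists H, H, sig; split.
- exact: hH.
- exact: hH.
- by move=> i; rewrite mxE mulr_ge0 // ?ler0n // ltW.
- have hd : diag_mx sig = cR *: (e *m e^T).
    apply/matrixP => i j; rewrite !mxE big_ord1 !mxE /ef.
    have [->|ij] := eqVneq i j.
      by rewrite mulr1n; case: (j == k); rewrite /= ?mulr1n ?mul1r ?mulr1 ?mul0r ?mulr0.
    rewrite mulr0n; have [ik|ik] := eqVneq i k; last by rewrite mul0r mulr0.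
    by rewrite -ik eq_sym (negbTE ij) /= mulr0 mulr0.
  rewrite hd -scalemxAr -scalemxAl !mulmxA -(mulmxA (H *m e)) -trmx_mul hHe.
  apply/matrixP => i j; rewrite !mxE big_ord1 !mxE /qf /uf.
  have -> : forall a b : R, cR * (s^-1 * a * (s^-1 * b)) = a * b by move=> a b; rewrite -s2; field; rewrite gt_eqF.
  by rewrite -natrM mulnb.
- rewrite (eq_bigr (fun j => ef j * cR)) ?Sd //= => j _.
  by rewrite mxE.
Qed.
Lemma sum_notin (n : nat) (S : {set 'I_n}) :
  \sum_i ((i \notin S)%:R : R) = #|~: S|%:R.
Proof.
rewrite -sumr_const [RHS]big_mkcond /=; apply: eq_bigr => i _.
by rewrite in_setC; case: (i \in S).
Qed.

Lemma sumS_le (n : nat) (S : {set 'I_n}) (f : 'I_n -> R) :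
  (forall i, 0 <= f i) -> \sum_(a < #|S|) f (enum_val a) <= \sum_i f i.
Proof.
move=> f0; rewrite -big_enum_val /= [X in _ <= X](bigID (mem S)) /=.
by rewrite lerDl sumr_ge0.
Qed.

End H.

Lemma arith (R : rcfType) (t K d z th m n Fr : R) : t * 1000 * 1000 = 1 -> 0 < z -> z < 1 ->
  0 <= th -> th <= z -> 10000 <= K -> 0 < d -> 0 < m -> m <= n ->
  (1 - th) * n <= m ->
  10 * d * K ^+ 3 * (t * m) - th * d * K * m <= Fr ->
  Fr <= t * (K * d * m + m * m * (K * d / (z * n))) -> z * n <= t * m.
Proof.
move=> ht z0 z1 th0 thz K4 d0 m0 mn hm hlo hup.
have n0 : 0 < n by apply: lt_le_trans mn.
have t0 : 0 < t by lra.
have K0 : 0 < K by lra.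
set a := K * d * m.
have a0 : 0 < a by rewrite /a !mulr_gt0.
have e1 : m * m * (K * d / (z * n)) <= a / z.
  have -> : m * m * (K * d / (z * n)) = (a / z) * (m / n).
    by rewrite /a; field; rewrite !gt_eqF.
  apply: ler_piMr; first by rewrite divr_ge0 // ltW.
  by rewrite ler_pdivrMr // mul1r.
have h : a * (10 * K ^+ 2 * t - th) <= a * (t * (1 + 1 / z)).
  have -> : a * (10 * K ^+ 2 * t - th) = 10 * d * K ^+ 3 * (t * m) - th * d * K * m.
    by rewrite /a; ring.
  have -> : a * (t * (1 + 1 / z)) = t * (a + a / z) by field; rewrite gt_eqF.
  apply: le_trans hlo _; apply: le_trans hup _.
  by apply: ler_wpM2l; [exact: ltW | rewrite lerD2l].
rewrite ler_pM2l // in h.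
have h3 : z * (10 * K ^+ 2 * t - th) <= t * (z + 1).
  have -> : t * (z + 1) = z * (t * (1 + 1 / z)) by field; rewrite gt_eqF.
  by apply: ler_wpM2l => //; exact: ltW.
have hK2 : 1000 <= 10 * K ^+ 2 * t.
  have : 10000 * 10000 <= K ^+ 2 by rewrite expr2; nra.
  move=> hk; nra.
have h4 : 999 * z <= t * z + t.
  have : z * 1000 <= z * (10 * K ^+ 2 * t) by apply: ler_wpM2l => //; exact: ltW.
  have : th * z <= z by nra.
  move=> hh1 hh2; nra.
have h5 : z <= t * (1 - z) by nra.
have h6 : z * n <= t * (1 - z) * n by apply: ler_wpM2r => //; exact: ltW.
have h7 : t * (1 - z) * n <= t * m.
  rewrite -mulrA; apply: ler_wpM2l; first exact: ltW.
  apply: le_trans hm; apply: ler_wpM2r; [exact: ltW | lra].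
exact: le_trans h6 h7.
Qed.

Lemma tle1 (R : rcfType) (t : R) : t * 1000 * 1000 = 1 -> 0 < t -> t <= 1.
Proof. move=> h1 h2; nra. Qed.

Lemma sum2_const (R : rcfType) (m : nat) (c : R) :
  \sum_(a < m) \sum_(b < m) c = m%:R * m%:R * c.
Proof. by rewrite !sumr_const !card_ord -mulrnA -(mulr_natl c) natrM. Qed.

Lemma sum1_const (R : rcfType) (m : nat) (c : R) :
  \sum_(a < m) c = m%:R * c.
Proof. by rewrite sumr_const card_ord -(mulr_natl c). Qed.

Lemma tauK (R : rcfType) (tau K r : R) : 1 <= K -> 0 <= r -> 0 <= tau ->
  tau ^+ 2 = r * (K * r) -> tau <= K * r.
Proof.
move=> K1 r0 t0 h.
have : tau ^+ 2 <= (K * r) ^+ 2 by rewrite h; nra.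
have : 0 <= K * r by nra.
move=> h1 h2; nra.
Qed.

Lemma bk (R : rcfType) (X c a b : R) : 0 < c -> X <= c * (a + b) / 2 ->
  a <= 1 -> b <= 1 -> X <= c.
Proof. move=> c0 h ha hb; nra. Qed.

Theorem mainTheorem12 (R : rcfType) (n : nat) (Ahat : 'M[R]_n) (ell : 'I_n -> R)
    (zeta d K : R)
    (hell : forall i, ell i = 1 \/ ell i = -1)
    (hzeta : 0 < zeta < 1) (hd : 0 < d) (hK : 10%:R ^+ 4 <= K)
    (F : 'M[R]_n) (S : {set 'I_n}) (theta : R)
    (htheta0 : 0 <= theta) (hthetaz : theta <= zeta)
    (hS : (1 - theta) * n%:R <= #|S|%:R)
    (h1 : forall i j, 0 <= subSxS S (hadamard F (outer ell)) i j)
    (h2 : exists Y Z : 'M[R]_#|S|,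
        [/\ subSxS S (Ahat - F) = Y + Z, opnorm_le Y (K * d)
          & forall i j, `|Z i j| <= K * d / (zeta * n%:R)])
    (h3 : resolvable (subSxS S (hadamard (Ahat - F) (outer ell)))
            (10%:R * d * K ^+ 3) (theta * d * K)) :
  boosting_feasible Ahat ell zeta d K theta
    (fun i => (i \notin S)%:R)
    (\matrix_(i, j) ((i \in S) && (j \in S))%:R)
    (\matrix_(i, j) ((i \notin S) && (j \notin S))%:R).
Proof.
move: hzeta => /andP [hz0 hz1].
have hcn : (#|~: S| + #|S| = n)%N by rewrite addnC cardsC card_ord.
have hn : (n%:R : R) = #|~: S|%:R + #|S|%:R by rewrite -natrD hcn.
have hc0 : (0 : R) <= #|~: S|%:R by rewrite ler0n.
have hm0 : (0 : R) <= #|S|%:R by rewrite ler0n.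
have hcR : (#|~: S|%:R : R) <= theta * n%:R.
  rewrite hn; rewrite hn in hS; nra.
have hmn : (#|S|%:R : R) <= n%:R by rewrite hn; lra.
have hK0 : 0 < K by apply: lt_le_trans hK; rewrite exprn_gt0 // ltr0n.
have hn0 : (0 : R) <= n%:R by rewrite ler0n.
split; first by rewrite htheta0 hthetaz.
split.
  split.
  - by move=> i j; rewrite mxE; case: (i \notin S); case: (j \notin S); rewrite /= ?ler01 ?lexx.
  - have -> : \sum_i \sum_j `|(\matrix_(i, j) ((i \notin S) && (j \notin S))%:R : 'M[R]_n) i j|
              = (\sum_i ((i \notin S)%:R : R)) * \sum_j ((j \notin S)%:R : R).
      rewrite mulr_suml; apply: eq_bigr => i _; rewrite mulr_sumr; apply: eq_bigr => j _.
      by rewrite mxE ger0_norm ?ler0n // -natrM mulnb.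
    rewrite sum_notin; nra.
  - have [U [V [sg [hU hV hsg hN hs]]]] := @rank1_tn R n S.
    by exists U, V, sg; split => //; apply: le_trans hs hcR.
split; first by move=> i; case: (i \in S); rewrite /= ?ler01 ?lexx.
split; first by rewrite sum_notin.
split; first by move=> i j; rewrite mxE ler0n.
split.
  move=> i j; rewrite !mxE.
  by case: (i \in S); case: (j \in S); rewrite /= ?mulr1n ?mulr0n; ring.
move=> rho' /andP [hr1 hr2] M x [hM hx hsx [N' [[hN1 hN2 hN3] hMe]]].
have hK4 : 10000 <= K by move: hK; rewrite -natrX.
have hr0 : 0 <= rho' by apply: le_trans hr1; rewrite divr_ge0 // ltW.
have hKr : theta <= K * rho'.
  have e : theta = K * (theta / K) by field; rewrite gt_eqF.
  rewrite [X in X <= _]e; apply: ler_wpM2l => //; exact: ltW.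
move: h2 => [Y [Z [hYZ hY hZ]]].
have hl2 : forall i, ell i * ell i = 1.
  by move=> i; case: (hell i) => ->; rewrite ?mulr1 ?mulrNN ?mulr1.
have hYZe : forall a b : 'I_#|S|, Ahat (enum_val a) (enum_val b) - F (enum_val a) (enum_val b) = Y a b + Z a b.
  by move=> a b; have := congr1 (fun A : 'M[R]_#|S| => A a b) hYZ; rewrite !mxE.
have hMij : forall i j, M i j = x i - N' i j by move=> i j; rewrite hMe !mxE.
pose G := subSxS S (hadamard (Ahat - F) (outer ell)).
pose Fh := subSxS S (hadamard F (outer ell)).
pose xs (a : 'I_#|S|) := x (enum_val a).
pose Nf (a b : 'I_#|S|) := N' (enum_val a) (enum_val b).
have eL : frob (hadamard (hadamard Ahat (outer ell)) (\matrix_(i, j) ((i \in S) && (j \in S))%:R)) M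
   = \sum_a \sum_b Fh a b * M (enum_val a) (enum_val b) + \sum_a \sum_b G a b * xs a
     - \sum_a \sum_b G a b * Nf a b.
  rewrite /frob.
  transitivity (\sum_(i in S) \sum_(j in S) Ahat i j * (ell i * ell j) * M i j).
    rewrite [RHS]big_mkcond; apply: eq_bigr => i _.
    case: (boolP (i \in S)) => hi.
      rewrite [RHS]big_mkcond; apply: eq_bigr => j _; rewrite !mxE hi /=.
      by case: (j \in S); rewrite /= ?mulr1n ?mulr0n ?mulr1 ?mulr0 ?mul0r.
    by rewrite big1 // => j _; rewrite !mxE (negbTE hi) /= mulr0n mulr0 mul0r.
  rewrite big_enum_val -big_split /= -sumrB; apply: eq_bigr => a _.
  rewrite big_enum_val -big_split /= -sumrB; apply: eq_bigr => b _.
  by rewrite /Fh /G /xs /Nf !mxE hMij; ring.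
rewrite eL.
have hT1 : 0 <= \sum_a \sum_b Fh a b * M (enum_val a) (enum_val b).
  apply: sumr_ge0 => a _; apply: sumr_ge0 => b _; apply: mulr_ge0; first exact: h1.
  by case/andP: (hM (enum_val a) (enum_val b)).
have hxs01 : forall a, 0 <= xs a <= 1 by move=> a; exact: hx.
have hsxs : \sum_a xs a <= rho' * n%:R.
  apply: le_trans hsx; apply: sumS_le => i.
  by case/andP: (hx i).
have hxsS : \sum_i x i * (1 - (i \notin S)%:R) = \sum_a xs a.
  rewrite /xs -big_enum_val /= [RHS]big_mkcond /=; apply: eq_bigr => i _.
  by case: (i \in S); rewrite /= ?subr0 ?mulr1 ?subrr ?mulr0.
rewrite hxsS.
have hT3 : \sum_a \sum_b G a b * Nf a b <= 2 * (K ^+ 2 * d * rho' * n%:R).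
  have hGe : forall a b, G a b = (Y a b + Z a b) * (ell (enum_val a) * ell (enum_val b)).
    by move=> a b; rewrite /G !mxE -hYZe.
  have hNe : forall i j, 0 <= N' i j by move=> i j; case/andP: (hN1 i j).
  have hl1 : forall i, `|ell i| = 1.
    by move=> i; case: (hell i) => ->; rewrite ?normr1 ?normrN1.
  have hKd : 0 < K * d by apply: mulr_gt0.
  move: hN3 => [U [V [sg [hU hV hsg hNd hsig]]]].
  have hNij : forall i j, N' i j = \sum_k U i k * sg 0 k * V j k.
    by move=> i j; rewrite hNd !mxE; apply: eq_bigr => k _; rewrite mul_mx_diag !mxE.
  set tau := Num.sqrt (rho' * (K * rho')) in hN2 hsig.
  have htau0 : 0 <= tau by apply: sqrtr_ge0.
  have htau2 : tau ^+ 2 = rho' * (K * rho').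
    by rewrite sqr_sqrtr // mulr_ge0 // mulr_ge0 // ltW.
  have htauK : tau <= K * rho'.
    have hK1 : 1 <= K by apply: le_trans hK4; rewrite ler1n.
    exact: tauK hK1 hr0 htau0 htau2.
  pose PY := \sum_a \sum_b Y a b * (ell (enum_val a) * ell (enum_val b)) * Nf a b.
  pose PZ := \sum_a \sum_b Z a b * (ell (enum_val a) * ell (enum_val b)) * Nf a b.
  have eT3 : \sum_a \sum_b G a b * Nf a b = PY + PZ.
    rewrite -big_split; apply: eq_bigr => a _; rewrite -big_split; apply: eq_bigr => b _.
    by rewrite hGe !mulrDl.
  have hPZ : PZ <= K * d / (zeta * n%:R) * (tau ^+ 2 * n%:R ^+ 2).
    have hc : 0 <= K * d / (zeta * n%:R).
      by apply: divr_ge0; [exact: ltW | apply: mulr_ge0; [exact: ltW|]].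
    apply: le_trans (_ : _ <= \sum_a \sum_b K * d / (zeta * n%:R) * Nf a b) _.
      apply: ler_sum => a _; apply: ler_sum => b _.
      apply: le_trans (ler_norm _) _.
      rewrite !normrM !hl1 !mulr1 (ger0_norm (hNe _ _)).
      by apply: ler_wpM2r => //; apply: hNe.
    under eq_bigr do rewrite -mulr_sumr.
    rewrite -mulr_sumr; apply: ler_wpM2l => //.
    apply: le_trans (_ : _ <= \sum_a \sum_j N' (enum_val a) j) _.
      apply: ler_sum => a _; apply: (sumS_le R n S (fun j => N' (enum_val a) j)) => j.
      exact: hNe.
    apply: le_trans (sumS_le R n S (fun i => \sum_j N' i j) _) _.
      by move=> i; apply: sumr_ge0 => j _; apply: hNe.
    apply: le_trans hN2.
    by apply: ler_sum => i _; apply: ler_sum => j _; apply: ler_norm.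
  have hPY : PY <= K * d * (tau * n%:R).
    pose u (k : 'I_n) (a : 'I_#|S|) := U (enum_val a) k * ell (enum_val a).
    pose v (k : 'I_n) (b : 'I_#|S|) := ell (enum_val b) * V (enum_val b) k.
    have ePY : PY = \sum_k sg 0 k * (\sum_a u k a * \sum_b Y a b * v k b).
      transitivity (\sum_k \sum_a \sum_b sg 0 k * (u k a * (Y a b * v k b))).
        rewrite exchange_big /=; apply: eq_bigr => a _.
        rewrite exchange_big /=; apply: eq_bigr => b _.
        rewrite /Nf hNij mulr_sumr; apply: eq_bigr => k _.
        by rewrite /u /v; ring.
      apply: eq_bigr => k _; rewrite mulr_sumr; apply: eq_bigr => a _.
      by rewrite mulr_sumr mulr_sumr; apply: eq_bigr => b _; ring.
    have hcol : forall (Wm : 'M[R]_n) (k : 'I_n), Defs.orthogonal Wm ->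
        \sum_(a < #|S|) Wm (enum_val a) k ^+ 2 <= 1.
      move=> Wm k hW.
      have e1 : \sum_(i < n) Wm i k ^+ 2 = 1.
        have := congr1 (fun A : 'M[R]_n => A k k) hW; rewrite !mxE eqxx mulr1n => <-.
        by apply: eq_bigr => i _; rewrite mxE expr2.
      rewrite -[X in _ <= X]e1; apply: (sumS_le R n S (fun i => Wm i k ^+ 2)) => i.
      exact: sqr_ge0.
    rewrite ePY.
    apply: le_trans (_ : _ <= \sum_k sg 0 k * (K * d)) _.
      apply: ler_sum => k _; apply: ler_wpM2l; first exact: hsg.
      apply: le_trans (opbound R _ Y (K * d) (u k) (v k) hKd hY) _.
      have hu : \sum_a u k a ^+ 2 <= 1.
        apply: le_trans (hcol U k hU).
        by apply: ler_sum => a _; rewrite /u /= exprMn [ell _ ^+ 2]expr2 hl2 mulr1 lexx.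
      have hv : \sum_a v k a ^+ 2 <= 1.
        apply: le_trans (hcol V k hV).
        by apply: ler_sum => a _; rewrite /v /= exprMn [ell _ ^+ 2]expr2 hl2 mul1r lexx.
      exact: bk hKd (le_refl _) hu hv.
    rewrite -mulr_suml mulrC; apply: ler_wpM2l => //; exact: ltW.
  rewrite eT3.
  have hZ2 : K * d / (zeta * n%:R) * (tau ^+ 2 * n%:R ^+ 2) <= K ^+ 2 * d * rho' * n%:R.
    have [n0 | nn0] := eqVneq (n%:R : R) 0.
      rewrite n0 expr0n /= !mulr0; exact: lexx.
    have e : K * d / (zeta * n%:R) * (tau ^+ 2 * n%:R ^+ 2) =
             (K ^+ 2 * d * rho' * n%:R) * (rho' / zeta).
      by rewrite htau2; field; rewrite nn0 gt_eqF.
    rewrite e; apply: ler_piMr.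
      by apply: mulr_ge0 => //; apply: mulr_ge0 => //; apply: mulr_ge0; rewrite ?exprn_ge0 ?ltW.
    by rewrite ler_pdivrMr // mul1r.
  have hY2 : K * d * (tau * n%:R) <= K ^+ 2 * d * rho' * n%:R.
    have hKd' := ltW hKd.
    have := ler_wpM2l hKd' (ler_wpM2r hn0 htauK).
    have -> : K ^+ 2 * d * rho' * n%:R = K * d * (K * rho' * n%:R) by ring.
    by move=> h.
  have -> : 2 * (K ^+ 2 * d * rho' * n%:R) = K ^+ 2 * d * rho' * n%:R + K ^+ 2 * d * rho' * n%:R by ring.
  exact: lerD (le_trans hPY hY2) (le_trans hPZ hZ2).
have hpre : \sum_a xs a <= 10^-1 ^+ 6 * #|S|%:R.
  set t : R := 10^-1 ^+ 6.
  have ht : t * 1000 * 1000 = 1.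
    by rewrite /t exprVn; field.
  have t0 : 0 < t by rewrite /t exprn_gt0 // invr_gt0 ltr0n.
  have [m0 | mpos] := posnP #|S|.
    rewrite /xs -big_enum_val /= (cards0_eq m0) big_set0 cards0 mulr0; exact: lexx.
  have hmpos : (0 : R) < #|S|%:R by rewrite ltr0n.
  have hKd : 0 < K * d by apply: mulr_gt0.
  pose xc (a : 'I_#|S|) := t.
  have hxc : forall a, 0 <= xc a <= 1.
    move=> a; rewrite /xc (ltW t0) /=.
    exact: tle1 ht t0.
  have hsc : \sum_a xc a = t * #|S|%:R.
    by rewrite /xc sumr_const card_ord mulr_natr.
  have hsc2 : \sum_a xc a <= t * #|S|%:R by rewrite hsc lexx.
  have hres := h3 xc hxc hsc2.
  rewrite hsc in hres.
  have hls : forall a : 'I_#|S|, ell (enum_val a) ^+ 2 = 1 by move=> a; rewrite expr2 hl2.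
  have hup : frob G (Yx xc) <= t * (K * d * #|S|%:R + #|S|%:R * #|S|%:R * (K * d / (zeta * n%:R))).
    have -> : frob G (Yx xc) = t * \sum_a \sum_b G a b.
      rewrite /frob mulr_sumr; apply: eq_bigr => a _; rewrite mulr_sumr; apply: eq_bigr => b _.
      by rewrite [in X in _ * X]mxE /xc mulrC.
    apply: ler_wpM2l; first exact: ltW.
    have hGe : forall a b, G a b = ell (enum_val a) * (Y a b * ell (enum_val b))
                 + Z a b * (ell (enum_val a) * ell (enum_val b)).
      by move=> a b; rewrite /G !mxE hYZe; ring.
    under eq_bigr do under eq_bigr do rewrite hGe.
    under eq_bigr do rewrite big_split /=.
    rewrite big_split /=; apply: lerD.
      under eq_bigr do rewrite -mulr_sumr.
      apply: le_trans (opbound R _ Y (K * d) (fun a => ell (enum_val a)) (fun a => ell (enum_val a)) hKd hY) _.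
      under eq_bigr do rewrite hls.
      rewrite sum1_const mulr1.
      have -> : K * d * (#|S|%:R + #|S|%:R) / 2 = K * d * #|S|%:R by field.
      exact: lexx.
    have hl1 : forall i, `|ell i| = 1.
      by move=> i; case: (hell i) => ->; rewrite ?normr1 ?normrN1.
    apply: le_trans (_ : _ <= \sum_(a < #|S|) \sum_(b < #|S|) K * d / (zeta * n%:R)) _.
      apply: ler_sum => a _; apply: ler_sum => b _.
      apply: le_trans (ler_norm _) _.
      by rewrite !normrM !hl1 !mulr1; apply: hZ.
    by rewrite sum2_const.
  have hzn : zeta * n%:R <= t * #|S|%:R.
    exact: (@arith R t K d zeta theta #|S|%:R n%:R (frob G (Yx xc))
      ht hz0 hz1 htheta0 hthetaz hK4 hd hmpos hmn hS hres hup).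
  apply: le_trans hsxs _; apply: le_trans hzn.
  by apply: ler_wpM2r.
have hT2 := h3 xs hxs01 hpre.
have eT2 : frob G (Yx xs) = \sum_a \sum_b G a b * xs a.
  by rewrite /frob; apply: eq_bigr => a _; apply: eq_bigr => b _; rewrite [in X in _ * X]mxE.
rewrite eT2 in hT2.
have hfin : theta * d * K * #|S|%:R <= K ^+ 2 * d * rho' * n%:R.
  have h1' : theta * d * K <= K ^+ 2 * d * rho'.
    have hdK : 0 <= d * K by apply: mulr_ge0; apply: ltW.
    have -> : K ^+ 2 * d * rho' = K * rho' * (d * K) by ring.
    have -> : theta * d * K = theta * (d * K) by ring.
    by apply: ler_wpM2r.
  have hKsq : 0 <= K ^+ 2 by rewrite exprn_ge0 // ltW.
  have hp : 0 <= K ^+ 2 * d * rho'.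
    by apply: mulr_ge0 => //; apply: mulr_ge0 => //; exact: ltW.
  apply: le_trans (ler_wpM2r hm0 h1') _.
  by apply: ler_wpM2l.
set T1 := \sum_a _ in hT1 *.
set T2 := \sum_a _ in hT2 *.
set T3 := \sum_a _ in hT3 *.
set sx := \sum_a xs a in hT2 *.
have -> : 10%:R * d * K ^+ 2 * (K * sx - rho' * n%:R) =
   10%:R * d * K ^+ 3 * sx - 10%:R * (K ^+ 2 * d * rho' * n%:R) by ring.
have hP : 0 <= K ^+ 2 * d * rho' * n%:R.
  by apply: mulr_ge0 => //; apply: mulr_ge0 => //; apply: mulr_ge0; rewrite ?exprn_ge0 ?ltW.
move: hT2 hT3 hfin hT1 hP; set P := K ^+ 2 * d * rho' * n%:R; set Q := 10%:R * d * K ^+ 3 * sx.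
move=> a1 a2 a3 a4 a5; lra.
Qed.
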